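(* Let $\mathcal{C}=\{C_1,\ldots,C_r\}$ be a partition of $C$ and let $F$ be a joint distribution of the component lifetimes without ties. Suppose there exists a function $\gamma\colon\prod_{j=1}^r\{0,\ldots,n_j\}\to\mathbb{R}$ with the following property. For every semicoherent structure $\phi$ admitting a modular decomposition $\phi(\mathbf{x})=\psi(\chi_1(\mathbf{x}^{C_1}),\ldots,\chi_r(\mathbf{x}^{C_r}))$, with $\chi_j\colon\{0,1\}^{C_j}\to\{0,1\}$ and $\psi\colon\{0,1\}^r\to\{0,1\}$ semicoherent, and for every $0\le k\le n$, $$\overline{P}_{n-k}=\sum_{\mathbf{a}\in\mathcal{T}_k}\gamma(\mathbf{a})\,\widehat\psi\big(\overline{P}_{1,n_1-a_1},\ldots,\overline{P}_{r,n_r-a_r}\big).$$ Then the relative quality function $q$ associated with $F$ is $\mathcal{C}$-decomposable.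
   Context: Consider components $C=[n]$ with random lifetimes $T_1,\ldots,T_n$ with joint distribution $F$ having no ties. Subsets are identified with Boolean vectors. A structure $\phi\colon\{0,1\}^m\to\{0,1\}$ is semicoherent if it is nondecreasing in each variable, $\phi(\mathbf{0})=0$ and $\phi(\mathbf{1})=1$. The relative quality function is $q(A)=\Pr(\max_{i\notin A}T_i<\min_{i\in A}T_i)$, with $q(\varnothing)=q([n])=1$. For a partition $\mathcal{C}=\{C_1,\ldots,C_r\}$ of $C$ into nonempty blocks, write $n_j=|C_j|$, $A_j=A\cap C_j$, $\mathbf{x}^{C_j}=(x_i)_{i\in C_j}$, and $q^{C_j}(A)=\Pr(\max_{i\in C_j\setminus A}T_i<\min_{i\in A}T_i)$ for $A\subseteq C_j$. The function $q$ is $\mathcal{C}$-decomposable if there is $\tilde c\colon\prod_j\{0,\ldots,n_j\}\to\mathbb{R}$ with $q(A)=\tilde c(|A_1|,\ldots,|A_r|)\prod_j q^{C_j}(A_j)$ for all $A\subseteq C$. The tail probability signatures are $\overline{P}_k=\sum_{|A|=n-k}q(A)\phi(A)$ for $(C,\phi)$ and $\overline{P}_{j,k}=\sum_{A\subseteq C_j,|A|=n_j-k}q^{C_j}(A)\chi_j(A)$ for $(C_j,\chi_j)$. Let $\mathcal{T}_k=\{\mathbf{a}\in\mathbb{N}^r:0\le a_j\le n_j,\ \sum_j a_j=k\}$. The multilinear extension is $\widehat\psi(\mathbf{z})=\sum_{B\subseteq[r]}\psi(B)\prod_{j\in B}z_j\prod_{j\notin B}(1-z_j)$. *)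

(* Defs.v *)
From HB Require Import structures.
From mathcomp Require Import all_boot all_order all_algebra all_fingroup.
Set Implicit Arguments. Unset Strict Implicit. Unset Printing Implicit Defensive.
Import Order.TTheory GRing.Theory Num.Theory.
Local Open Scope ring_scope.

(* A joint lifetime distribution without ties is
   represented by the law of the (a.s. well-defined) failure ordering:
   a probability mass function p on permutations s : {perm 'I_n}, where
   s i is the rank of component i in the failure order (T_i < T_j iff
   s i < s j). All the quantities in the statement depend on F only
   through this law. *)

Definition is_pmf (R : realFieldType) (n : nat) (p : {perm 'I_n} -> R) :=
  (forall s, 0 <= p s) /\ \sum_(s : {perm 'I_n}) p s = 1.

(* relative quality function q(A) = Pr(max_{i notin A} T_i < min_{i in A} T_i) *)
Definition qrel (R : realFieldType) (n : nat) (p : {perm 'I_n} -> R)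
  (A : {set 'I_n}) : R :=
  \sum_(s : {perm 'I_n})
     p s * (([forall i, forall k, ((i \notin A) && (k \in A)) ==> (s i < s k)%N]
            : bool)%:R).

Definition block (n r : nat) (blk : 'I_n -> 'I_r) (j : 'I_r) : {set 'I_n} :=
  [set i | blk i == j].

Definition qblock (R : realFieldType) (n r : nat) (p : {perm 'I_n} -> R)
  (blk : 'I_n -> 'I_r) (j : 'I_r) (A : {set 'I_n}) : R :=
  \sum_(s : {perm 'I_n})
     p s * (([forall i, forall k,
               ((i \in block blk j :\: A) && (k \in A)) ==> (s i < s k)%N]
            : bool)%:R).

Definition semicoherent_on (T : finType) (U : {set T}) (f : {set T} -> bool) :=
  [/\ forall A B : {set T}, A \subset B -> B \subset U -> f A -> f B,
      f set0 = false & f U = true].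

Definition Pbar (R : realFieldType) (n : nat) (p : {perm 'I_n} -> R)
  (phi : {set 'I_n} -> bool) (k : nat) : R :=
  \sum_(A : {set 'I_n} | #|A| == (n - k)%N) qrel p A * (phi A)%:R.

Definition Pbarj (R : realFieldType) (n r : nat) (p : {perm 'I_n} -> R)
  (blk : 'I_n -> 'I_r) (j : 'I_r) (chi : {set 'I_n} -> bool) (k : nat) : R :=
  \sum_(A : {set 'I_n} | (A \subset block blk j) &&
                         (#|A| == (#|block blk j| - k)%N))
     qblock p blk j A * (chi A)%:R.

Definition mlext (R : realFieldType) (r : nat) (psi : {set 'I_r} -> bool)
  (z : 'I_r -> R) : R :=
  \sum_(B : {set 'I_r})
     (psi B)%:R * (\prod_(j in B) z j) * (\prod_(j in ~: B) (1 - z j)).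

Definition inT (n r : nat) (blk : 'I_n -> 'I_r) (k : nat)
  (a : {ffun 'I_r -> 'I_n.+1}) : bool :=
  [forall j, (a j <= #|block blk j|)%N] && ((\sum_(j < r) (a j : nat))%N == k).

(* Main.v *)
Require Import Defs.
From HB Require Import structures.
From mathcomp Require Import all_boot all_order all_algebra all_fingroup.
From Stdlib Require Import FunctionalExtensionality.
Import Order.TTheory GRing.Theory Num.Theory.
Local Open Scope ring_scope.

Lemma nat_sum_eq_le (r : nat) (a b : 'I_r -> nat) :
  (forall j, (b j <= a j)%N) -> (\sum_(j < r) a j)%N = (\sum_(j < r) b j)%N ->
  forall j, a j = b j.
Proof.
move=> le Hs j.
have H := @leqif_sum _ predT (fun i => b i == a i) b a (fun i _ => leqif_eq (le i)).
move: H => [_ /esym]; rewrite Hs eqxx => /forallP /(_ j) /= /eqP.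
by move=> ->.
Qed.

Lemma card_blocks (n r : nat) (blk : 'I_n -> 'I_r) (A : {set 'I_n}) :
  #|A| = (\sum_(j < r) #|A :&: block blk j|)%N.
Proof.
rewrite -sum1_card (partition_big blk predT) //=.
apply: eq_bigr => j _; rewrite -sum1_card; apply: eq_bigl => i.
by rewrite !inE.
Qed.

Theorem theorem15 (R : realFieldType) (n r : nat) (blk : 'I_n -> 'I_r)
  (p : {perm 'I_n} -> R) :
  (forall j : 'I_r, exists i : 'I_n, blk i = j) ->
  is_pmf p ->
  (exists gamma : ('I_r -> nat) -> R,
     forall (psi : {set 'I_r} -> bool) (chi : 'I_r -> {set 'I_n} -> bool),
       semicoherent_on [set: 'I_r] psi ->
       (forall j, semicoherent_on (block blk j) (chi j)) ->
       let phi := fun A : {set 'I_n} =>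
                    psi [set j | chi j (A :&: block blk j)] in
       forall k : nat, (k <= n)%N ->
         Pbar p phi (n - k) =
         \sum_(a : {ffun 'I_r -> 'I_n.+1} | inT blk k a)
            gamma (fun j => (a j : nat)) *
            mlext psi (fun j => Pbarj p blk j (chi j)
                                  (#|block blk j| - a j)%N)) ->
  exists ctilde : ('I_r -> nat) -> R,
    forall A : {set 'I_n},
      qrel p A = ctilde (fun j => #|A :&: block blk j|) *
                 \prod_(j < r) qblock p blk j (A :&: block blk j).
Proof.
move=> surj [p0 p1] [gamma Hg].
have qb0 j : qblock p blk j set0 = 1.
  rewrite /qblock -[RHS]p1; apply: eq_bigr => s _.
  suff -> : [forall i, forall k, ((i \in block blk j :\: set0) && (k \in set0))
              ==> (s i < s k)%N] by rewrite mulr1.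
  by apply/forallP => i; apply/forallP => k; rewrite in_set0 andbF.
have blkne j : block blk j != set0.
  have [i <-] := surj j; apply/set0Pn; exists i; by rewrite inE.
exists (fun f => if [forall j, f j == 0%N] then 1 else gamma f).
move=> A.
case: (boolP [forall j, #|A :&: block blk j| == 0%N]) => Hz.
  have -> : A = set0.
    apply/setP => i; rewrite inE; apply/negbTE/negP => iA.
    move/forallP: Hz => /(_ (blk i)); rewrite cards_eq0 => /eqP /setP /(_ i).
    by rewrite !inE iA eqxx.
  rewrite mul1r big1 => [|j _]; last by rewrite set0I qb0.
  rewrite /qrel -[RHS]p1; apply: eq_bigr => s _.
  suff -> : [forall i, forall k, ((i \notin set0) && (k \in set0))
              ==> (s i < s k)%N] by rewrite mulr1.
  by apply/forallP => i; apply/forallP => k; rewrite !in_set0 andbF.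
set S := [set j | A :&: block blk j != set0].
have [j0 j0nz] : exists j, #|A :&: block blk j| != 0%N.
  by move/forallPn: Hz => [j Hj]; exists j.
have j0S : j0 \in S by rewrite inE -cards_eq0.
set psi := fun B : {set 'I_r} => S \subset B.
set chi := fun j (X : {set 'I_n}) =>
  (A :&: block blk j \subset X) && ((j \in S) || (block blk j \subset X)).
have Hpsi : semicoherent_on [set: 'I_r] psi.
  split.
  - by move=> B1 B2 s12 _ sS; apply: subset_trans sS s12.
  - apply/negP => /subsetP /(_ j0 j0S); by rewrite inE.
  - exact: subsetT.
have Hchi : forall j, semicoherent_on (block blk j) (chi j).
  move=> j; split.
  - move=> B1 B2 s12 _ /andP[h1 h2]; apply/andP; split.
      exact: subset_trans h1 s12.
    case/orP: h2 => [->//|h2]; by rewrite (subset_trans h2 s12) orbT.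
  - apply/negP => /andP[h1 h2].
    case/orP: h2 => [jS|h2].
      move: jS; rewrite inE => /negP; apply; by rewrite -subset0.
    move: (blkne j); by rewrite -subset0 h2.
  - by rewrite /chi subsetIr subxx orbT.
have cardA : (#|A| <= n)%N by move: (max_card A); rewrite card_ord.
have H := Hg psi chi Hpsi Hchi.
cbv zeta in H.
move: (H #|A| cardA) => {H}.
have -> : Pbar p (fun A0 => psi [set j | chi j (A0 :&: block blk j)]) (n - #|A|)
          = qrel p A.
  rewrite /Pbar subKn // (bigD1 A) //= big1 ?addr0.
    suff -> : psi [set j | chi j (A :&: block blk j)] by rewrite mulr1.
    apply/subsetP => j jS; by rewrite inE /chi subxx jS.
  move=> X /andP[/eqP cX neq].
  suff -> : psi [set j | chi j (X :&: block blk j)] = false by rewrite mulr0.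
  apply/negP => /subsetP Hs.
  have AX : A \subset X.
    apply/subsetP => i iA.
    have iS : blk i \in S.
      rewrite inE; apply/set0Pn; exists i; by rewrite !inE iA eqxx.
    move: (Hs _ iS); rewrite inE => /andP[/subsetP /(_ i) h _].
    have : i \in X :&: block blk (blk i) by apply: h; rewrite !inE iA eqxx.
    by rewrite inE => /andP[].
  move: neq; by rewrite eq_sym eqEcard AX cX leqnn.
set a0 : {ffun 'I_r -> 'I_n.+1} := [ffun j => inord #|A :&: block blk j|].
have a0E j : (a0 j : nat) = #|A :&: block blk j|.
  rewrite ffunE inordK // ltnS.
  apply: leq_trans cardA; apply: subset_leq_card; exact: subsetIl.
have ina0 : inT blk #|A| a0.
  apply/andP; split.
    apply/forallP => j; rewrite a0E; apply: subset_leq_card; exact: subsetIr.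
  apply/eqP; rewrite (@card_blocks _ _ blk A); apply: eq_bigr => j _; by rewrite a0E.
rewrite (bigD1 a0) //= big1 ?addr0; last first.
  move=> a /andP[ia neq].
  have [j ltj] : exists j, (a j < #|A :&: block blk j|)%N.
    case: (boolP [exists j, (a j < #|A :&: block blk j|)%N]) => [/existsP//|].
    move/existsPn => Hn; exfalso; move/negP: neq; apply.
    move/andP: ia => [_ /eqP sa].
    have Heq := @nat_sum_eq_le r (fun j => a j) (fun j => #|A :&: block blk j|).
    apply/eqP/ffunP => j; apply: val_inj; rewrite /= a0E; apply: Heq => //.
      by move=> i; rewrite leqNgt Hn.
    by rewrite sa -card_blocks.
  have jS : j \in S by rewrite inE -cards_eq0 -lt0n (leq_ltn_trans _ ltj).
  have ajle : (a j <= #|block blk j|)%N.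
    by move/andP: ia => [/forallP /(_ j) ? _].
  have zj : Pbarj p blk j (chi j) (#|block blk j| - a j) = 0.
    rewrite /Pbarj subKn // big1 // => X /andP[_ /eqP cX].
    case: (boolP (chi j X)) => [/andP[sub _]|]; last by rewrite mulr0.
    exfalso; move: (subset_leq_card sub); by rewrite cX leqNgt ltj.
  rewrite /mlext big1 ?mulr0 // => B _.
  case: (boolP (psi B)) => [/subsetP /(_ j jS) jB|_]; last by rewrite !mul0r.
  by rewrite (bigD1 j) //= zj !mul0r mulr0 mul0r.
have z0E j : Pbarj p blk j (chi j) (#|block blk j| - a0 j) =
             if j \in S then qblock p blk j (A :&: block blk j) else 0.
  rewrite /Pbarj a0E subKn; last by apply: subset_leq_card; exact: subsetIr.
  rewrite (bigD1 (A :&: block blk j)) /=; last by rewrite subsetIr eqxx.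
  rewrite big1 ?addr0.
    rewrite /chi subxx /=; case: (boolP (j \in S)) => jS /=; first by rewrite mulr1.
    suff -> : (block blk j \subset A :&: block blk j) = false by rewrite mulr0.
    apply/negP => sub; move: jS; rewrite inE negbK => /eqP e.
    move: (blkne j); by rewrite -subset0 -e sub.
  move=> X /andP[/andP[_ /eqP cX] neq].
  case: (boolP (chi j X)) => [/andP[sub _]|]; last by rewrite mulr0.
  exfalso; move/negP: neq; apply.
  by rewrite eq_sym eqEcard sub cX leqnn.
have -> : mlext psi (fun j => Pbarj p blk j (chi j) (#|block blk j| - a0 j)) =
          \prod_(j in S) qblock p blk j (A :&: block blk j).
  rewrite /mlext (bigD1 S) //= [X in _ + X = _]big1 ?addr0.
    rewrite /psi subxx mul1r [X in _ * X]big1 ?mulr1.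
      by apply: eq_bigr => j jS; rewrite z0E jS.
    by move=> j; rewrite inE => /negbTE jS; rewrite z0E jS subr0.
  move=> B neq.
  case: (boolP (psi B)) => [sSB|_]; last by rewrite !mul0r.
  have : ~~ (B \subset S).
    apply/negP => sBS; move/negP: neq; apply; by rewrite eqEsubset sBS; exact: sSB.
  case/subsetPn => j jB jS.
  by rewrite (bigD1 j) //= z0E (negbTE jS) !mul0r mulr0 mul0r.
have -> : \prod_(j in S) qblock p blk j (A :&: block blk j) =
          \prod_(j < r) qblock p blk j (A :&: block blk j).
  rewrite [RHS](bigID (fun j => j \in S)) /= [X in _ = _ * X]big1 ?mulr1 //.
  move=> j jS; move: jS; rewrite inE negbK => /eqP ->; exact: qb0.
have -> : (fun j => (a0 j : nat)) = (fun j => #|A :&: block blk j|).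
  by apply: functional_extensionality => j; rewrite a0E.
by [].
Qed.
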